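(* Let $i,j\geq 1$ be integers. For $n\geq 0$, let $U(i,j,n)$ be the set of all triples $(L_1,L_2,L_3)$ of walks of length $n$ with steps $(1,1)$ and $(1,-1)$, where $L_1$ starts at $(0,0)$, $L_2$ starts at $(0,2i)$ and $L_3$ starts at $(0,2i+2j)$. Let $V(i,j,n)$ be the set of triples in $U(i,j,n)$ whose three walks are pairwise nonintersecting, and for $\{a,b\}\in\{\{1,2\},\{2,3\},\{1,3\}\}$ let $W_{ab}(n)$ be the set of triples in $U(i,j,n)$ such that $L_a$ and $L_b$ do not intersect. Define $V_{i,j}(t)=\sum_{n\geq 0}|V(i,j,n)|t^n$ and $W_{ab}(t)=\sum_{n\geq0}|W_{ab}(n)|t^n$. Then $$V_{i,j}(t)=W_{12}(t)+W_{23}(t)-W_{13}(t).$$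
   Context: Two walks intersect if they share a common lattice point; otherwise they are nonintersecting. *)

(* Defs.v *)
From mathcomp Require Import all_boot all_order all_algebra.
Set Implicit Arguments. Unset Strict Implicit. Unset Printing Implicit Defensive.
Import Order.TTheory GRing.Theory Num.Theory.
Local Open Scope ring_scope.

(* A walk of length n with steps (1,1) (true) and (1,-1) (false). *)
Definition walk (n : nat) := (n.-tuple bool)%type.

(* Height (y-coordinate) after k steps of the walk w started at (0, s);
   the walk visits the lattice points (k, height s w k), 0 <= k <= n. *)
Definition height (s : int) (w : seq bool) (k : nat) : int :=
  s + \sum_(b <- take k w) (if b then 1 else -1).

(* Two walks of length n (started at heights sa, sb on the line x = 0)
   intersect iff they share a lattice point, i.e. have the same height at
   some common abscissa k in {0..n}. *)
Definition intersect (n : nat) (sa : int) (wa : walk n) (sb : int) (wb : walk n) : bool :=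
  [exists k : 'I_n.+1, height sa wa k == height sb wb k].

Definition triple (n : nat) := (walk n * walk n * walk n)%type.

Definition s1 (i j : nat) : int := 0.
Definition s2 (i j : nat) : int := (2 * i)%:Z.
Definition s3 (i j : nat) : int := (2 * i + 2 * j)%:Z.

Definition L1 n (t : triple n) : walk n := t.1.1.
Definition L2 n (t : triple n) : walk n := t.1.2.
Definition L3 n (t : triple n) : walk n := t.2.

Definition Uset (i j n : nat) : {set triple n} := [set: triple n].

Definition Vset (i j n : nat) : {set triple n} :=
  [set t in Uset i j n |
     [&& ~~ intersect (s1 i j) (L1 t) (s2 i j) (L2 t),
         ~~ intersect (s2 i j) (L2 t) (s3 i j) (L3 t) &
         ~~ intersect (s1 i j) (L1 t) (s3 i j) (L3 t)]].

Definition W12set (i j n : nat) : {set triple n} :=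
  [set t in Uset i j n | ~~ intersect (s1 i j) (L1 t) (s2 i j) (L2 t)].
Definition W23set (i j n : nat) : {set triple n} :=
  [set t in Uset i j n | ~~ intersect (s2 i j) (L2 t) (s3 i j) (L3 t)].
Definition W13set (i j n : nat) : {set triple n} :=
  [set t in Uset i j n | ~~ intersect (s1 i j) (L1 t) (s3 i j) (L3 t)].

(* Formal power series in t with integer coefficients, represented by their
   coefficient sequence n |-> [t^n]; equality of series = equality of
   coefficient sequences, sum/difference are coefficientwise. *)
Definition fps := (nat -> int)%type.
Definition fps_add (f g : fps) : fps := fun n => f n + g n.
Definition fps_sub (f g : fps) : fps := fun n => f n - g n.

Definition Vgf (i j : nat) : fps := fun n => (#|Vset i j n|)%:Z.
Definition W12gf (i j : nat) : fps := fun n => (#|W12set i j n|)%:Z.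
Definition W23gf (i j : nat) : fps := fun n => (#|W23set i j n|)%:Z.
Definition W13gf (i j : nat) : fps := fun n => (#|W13set i j n|)%:Z.

(* Main.v *)
Require Import Defs.
From mathcomp Require Import all_boot all_order all_algebra zify.
From Stdlib Require Import FunctionalExtensionality.
Set Implicit Arguments. Unset Strict Implicit. Unset Printing Implicit Defensive.
Import Order.TTheory GRing.Theory Num.Theory.
Local Open Scope ring_scope.

Lemma height0 s w : height s w 0 = s.
Proof. by rewrite /height take0 big_nil addr0. Qed.

Lemma heightS s w k : height s w k.+1 = height s w k +
  (if (k < size w)%N then (if nth false w k then 1 else -1) else 0).
Proof.
rewrite /height; case: ltnP => hk.
  by rewrite (take_nth false hk) -cats1 big_cat big_seq1 /= addrA.
by rewrite !take_oversize ?addr0 // ltnW.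
Qed.

Lemma order_lem sa sb (wa wb : seq bool) (c : int) :
  size wa = size wb -> sb - sa = 2 * c -> 0 < c -> forall K,
  (forall k, (k <= K)%N -> height sa wa k != height sb wb k) ->
  exists m : int, height sb wb K - height sa wa K = 2 * m /\ 0 < m.
Proof.
move=> hs hc c0; elim=> [|K IH] H.
  by exists c; rewrite !height0.
have [m [hm m0]] := IH (fun k hk => H k (leqW hk)).
have := H K.+1 (leqnn _); rewrite !heightS hs => /eqP.
case: ifP => _; last by move=> _; exists m; split; lia.
case: (nth false wa K); case: (nth false wb K) => h;
  solve [exists m; split; lia | exists (m+1); split; lia | exists (m-1); split; lia].
Qed.

Lemma order_lt sa sb (wa wb : seq bool) (c : int) :
  size wa = size wb -> sb - sa = 2 * c -> 0 < c -> forall K,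
  (forall k, (k <= K)%N -> height sa wa k != height sb wb k) ->
  height sa wa K < height sb wb K.
Proof.
move=> hs hc c0 K H; have [m [hm m0]] := order_lem hs hc c0 H; lia.
Qed.

Definition swp (a : nat) (w v : seq bool) := take a w ++ drop a v.

Lemma size_swp n a (w v : seq bool) : size w = n -> size v = n -> size (swp a w v) = n.
Proof. move=> hw hv; rewrite /swp size_cat size_take size_drop hw hv; case: ltnP; lia. Qed.

Lemma hsw_le s a k (w v : seq bool) : (a <= size w)%N -> (k <= a)%N ->
  height s (swp a w v) k = height s w k.
Proof.
move=> ha hk; rewrite /height /swp take_cat size_takel //.
case: ltnP => hk'; first by rewrite take_takel.
have -> : k = a by apply/eqP; rewrite eqn_leq hk hk'.
by rewrite subnn take0 cats0.
Qed.

Lemma hsw_ge s s' a k (w v : seq bool) : (a <= size w)%N -> (a <= k)%N ->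
  height s' v a = height s w a ->
  height s (swp a w v) k = height s' v k.
Proof.
move=> ha hk he; move: he; rewrite /height /swp.
have -> : k = (a + (k - a))%N by lia.
have E : take (a + (k - a)) (take a w ++ drop a v) = take a w ++ take (k - a) (drop a v).
  by rewrite takeD take_size_cat ?size_takel // drop_size_cat ?size_takel.
rewrite E takeD !big_cat /= => he. by rewrite addrA -he addrA.
Qed.

Lemma swpK a (w v : seq bool) : (a <= size w)%N -> (a <= size v)%N ->
  swp a (swp a w v) (swp a v w) = w.
Proof.
move=> hw hv; rewrite /swp take_cat drop_cat !size_takel // ltnn subnn take0 cats0.
by rewrite drop0 cat_take_drop.
Qed.


Definition fmP n (P : pred nat) := find P (iota 0 n.+1).

Lemma hasP_iota n (P : pred nat) :
  reflect (exists k, (k <= n)%N /\ P k) (has P (iota 0 n.+1)).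
Proof.
apply: (iffP hasP) => [[k] | [k [hk hP]]].
  by rewrite mem_iota add0n ltnS => hk hP; exists k.
by exists k; rewrite // mem_iota add0n ltnS.
Qed.

Lemma fm_spec n (P : pred nat) : has P (iota 0 n.+1) -> (fmP n P <= n)%N /\ P (fmP n P).
Proof.
move=> h; have := nth_find 0 h; rewrite has_find size_iota in h.
by rewrite nth_iota // add0n; split.
Qed.

Lemma fm_before n (P : pred nat) k : (k < fmP n P)%N -> ~~ P k.
Proof.
move=> hk; have := before_find 0 hk.
have hs : (k < n.+1)%N.
  by apply: (leq_trans hk); rewrite -[n.+1](size_iota 0) find_size.
by rewrite nth_iota // add0n => ->.
Qed.

Lemma fm_uniq n (P : pred nat) a : (a <= n)%N -> P a ->
  (forall k, (k < a)%N -> ~~ P k) -> fmP n P = a.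
Proof.
move=> ha hP hb.
have hh : has P (iota 0 n.+1) by apply/hasP_iota; exists a.
have [h1 h2] := fm_spec hh.
case: (ltngtP (fmP n P) a) => // h.
  by have := hb _ h; rewrite h2.
by have := fm_before h; rewrite hP.
Qed.

Definition mt (sa : int) (wa : seq bool) (sb : int) (wb : seq bool) : pred nat :=
  fun k => height sa wa k == height sb wb k.

Lemma intersect_has n sa (wa : walk n) sb (wb : walk n) :
  intersect sa wa sb wb = has (mt sa wa sb wb) (iota 0 n.+1).
Proof.
apply/existsP/hasP_iota => [[k hk] | [k [hk hP]]].
  by exists k; rewrite -ltnS ltn_ord.
by exists (Ordinal (hk : (k < n.+1)%N)).
Qed.

Lemma interP n sa (wa : walk n) sb (wb : walk n) :
  reflect (exists k, (k <= n)%N /\ height sa wa k = height sb wb k) (intersect sa wa sb wb).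
Proof.
rewrite intersect_has; apply: (iffP (hasP_iota _ _)) => [[k [hk /eqP h]]|[k [hk h]]];
  by exists k; split => //; apply/eqP.
Qed.

Lemma ninterP n sa (wa : walk n) sb (wb : walk n) :
  (forall k, (k <= n)%N -> height sa wa k != height sb wb k) -> ~~ intersect sa wa sb wb.
Proof.
move=> H; apply/negP => /interP [k [hk he]]; by move: (H k hk); rewrite he eqxx.
Qed.

Lemma ninterE n sa (wa : walk n) sb (wb : walk n) k : ~~ intersect sa wa sb wb ->
   (k <= n)%N -> height sa wa k != height sb wb k.
Proof.
move=> /negP H hk; apply/negP => /eqP he; apply: H; apply/interP; by exists k.
Qed.

Definition tsw n a (w v : walk n) : walk n := insubd w (swp a w v).
Lemma tswE n a (w v : walk n) : val (tsw a w v) = swp a w v.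
Proof. by rewrite val_insubd (@size_swp n) ?size_tuple ?eqxx. Qed.


Section Main.
Variables i j n : nat.
Hypotheses (hi : (1 <= i)%N) (hj : (1 <= j)%N).

Definition H1 (t : triple n) k := height (s1 i j) (L1 t) k.
Definition H2 (t : triple n) k := height (s2 i j) (L2 t) k.
Definition H3 (t : triple n) k := height (s3 i j) (L3 t) k.
Definition X (t : triple n) := intersect (s1 i j) (L1 t) (s2 i j) (L2 t).
Definition Y (t : triple n) := intersect (s2 i j) (L2 t) (s3 i j) (L3 t).
Definition Z (t : triple n) := intersect (s1 i j) (L1 t) (s3 i j) (L3 t).
Definition fa (t : triple n) := fmP n (mt (s1 i j) (L1 t) (s2 i j) (L2 t)).
Definition fb (t : triple n) := fmP n (mt (s2 i j) (L2 t) (s3 i j) (L3 t)).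

Lemma ord12 t K : (forall k, (k <= K)%N -> H1 t k != H2 t k) -> H1 t K < H2 t K.
Proof. apply: (@order_lt _ _ _ _ (i%:Z)); rewrite ?size_tuple //= /s1 /s2; lia. Qed.
Lemma ord23 t K : (forall k, (k <= K)%N -> H2 t k != H3 t k) -> H2 t K < H3 t K.
Proof. apply: (@order_lt _ _ _ _ (j%:Z)); rewrite ?size_tuple //= /s3 /s2; lia. Qed.

Lemma Xspec t : X t -> (fa t <= n)%N /\ H1 t (fa t) = H2 t (fa t).
Proof. by rewrite /X intersect_has => /fm_spec [h /eqP e]. Qed.
Lemma Yspec t : Y t -> (fb t <= n)%N /\ H2 t (fb t) = H3 t (fb t).
Proof. by rewrite /Y intersect_has => /fm_spec [h /eqP e]. Qed.
Lemma Xbef t k : (k < fa t)%N -> H1 t k != H2 t k.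
Proof. exact: fm_before. Qed.
Lemma Ybef t k : (k < fb t)%N -> H2 t k != H3 t k.
Proof. exact: fm_before. Qed.

Lemma noZ t : ~~ X t -> ~~ Y t -> ~~ Z t.
Proof.
move=> nX nY; apply: ninterP => k hk.
have l1 : H1 t k < H2 t k by apply: ord12 => m hm; apply: ninterE nX _; lia.
have l2 : H2 t k < H3 t k by apply: ord23 => m hm; apply: ninterE nY _; lia.
rewrite /H1 /H2 /H3 in l1 l2; apply/eqP; lia.
Qed.

Definition sw12 (t : triple n) : triple n :=
  (tsw (fa t) (L1 t) (L2 t), tsw (fa t) (L2 t) (L1 t), L3 t).
Definition sw23 (t : triple n) : triple n :=
  (L1 t, tsw (fb t) (L2 t) (L3 t), tsw (fb t) (L3 t) (L2 t)).

Section S12.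
Variable t : triple n.
Hypothesis hX : X t.
Lemma s12_1le k : (k <= fa t)%N -> H1 (sw12 t) k = H1 t k.
Proof. have [ha _] := Xspec hX; move=> hk; rewrite /H1 /L1 /= tswE hsw_le ?size_tuple //. Qed.
Lemma s12_2le k : (k <= fa t)%N -> H2 (sw12 t) k = H2 t k.
Proof. have [ha _] := Xspec hX; move=> hk; rewrite /H2 /L2 /= tswE hsw_le ?size_tuple //. Qed.
Lemma s12_1ge k : (fa t <= k)%N -> H1 (sw12 t) k = H2 t k.
Proof. have [ha he] := Xspec hX; move=> hk; rewrite /H1 /L1 /= tswE (@hsw_ge _ (s2 i j)) ?size_tuple //; by rewrite he. Qed.
Lemma s12_2ge k : (fa t <= k)%N -> H2 (sw12 t) k = H1 t k.
Proof. have [ha he] := Xspec hX; move=> hk; rewrite /H2 /L2 /= tswE (@hsw_ge _ (s1 i j)) ?size_tuple //; by rewrite he. Qed.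
Lemma s12_3 k : H3 (sw12 t) k = H3 t k.
Proof. by []. Qed.
Lemma fa12 : fa (sw12 t) = fa t.
Proof.
have [ha he] := Xspec hX; apply: fm_uniq => //.
  by rewrite /mt -/(H1 _ _) -/(H2 _ _) s12_1le // s12_2le // he.
move=> k hk; rewrite /mt -/(H1 _ _) -/(H2 _ _) s12_1le ?s12_2le; try lia.
exact: Xbef.
Qed.
Lemma sw12K : sw12 (sw12 t) = t.
Proof.
have [ha he] := Xspec hX.
rewrite {1}/sw12 fa12; case: t hX ha he fa12 => [[w1 w2] w3] /= _ ha _ _.
rewrite /sw12 /L1 /L2 /L3 /=; congr (_, _, _); apply: val_inj; rewrite !tswE swpK //;
  by rewrite size_tuple.
Qed.
End S12.

Section S23.
Variable t : triple n.
Hypothesis hY : Y t.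
Lemma s23_2le k : (k <= fb t)%N -> H2 (sw23 t) k = H2 t k.
Proof. have [ha _] := Yspec hY; move=> hk; rewrite /H2 /L2 /= tswE hsw_le ?size_tuple //. Qed.
Lemma s23_3le k : (k <= fb t)%N -> H3 (sw23 t) k = H3 t k.
Proof. have [ha _] := Yspec hY; move=> hk; rewrite /H3 /L3 /= tswE hsw_le ?size_tuple //. Qed.
Lemma s23_2ge k : (fb t <= k)%N -> H2 (sw23 t) k = H3 t k.
Proof. have [ha he] := Yspec hY; move=> hk; rewrite /H2 /L2 /= tswE (@hsw_ge _ (s3 i j)) ?size_tuple //; by rewrite he. Qed.
Lemma s23_3ge k : (fb t <= k)%N -> H3 (sw23 t) k = H2 t k.
Proof. have [ha he] := Yspec hY; move=> hk; rewrite /H3 /L3 /= tswE (@hsw_ge _ (s2 i j)) ?size_tuple //; by rewrite he. Qed.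
Lemma s23_1 k : H1 (sw23 t) k = H1 t k.
Proof. by []. Qed.
Lemma fb23 : fb (sw23 t) = fb t.
Proof.
have [ha he] := Yspec hY; apply: fm_uniq => //.
  by rewrite /mt -/(H2 _ _) -/(H3 _ _) s23_2le // s23_3le // he.
move=> k hk; rewrite /mt -/(H2 _ _) -/(H3 _ _) s23_2le ?s23_3le; try lia.
exact: Ybef.
Qed.
Lemma sw23K : sw23 (sw23 t) = t.
Proof.
have [ha he] := Yspec hY.
rewrite {1}/sw23 fb23; case: t hY ha he fb23 => [[w1 w2] w3] /= _ ha _ _.
rewrite /sw23 /L1 /L2 /L3 /=; congr (_, _, _); apply: val_inj; rewrite !tswE swpK //;
  by rewrite size_tuple.
Qed.
End S23.

Definition phi (t : triple n) : triple n :=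
  if X t && Y t && ~~ Z t then (if (fa t < fb t)%N then sw12 t else sw23 t)
  else if Z t && ~~ Y t then sw12 t
  else if Z t && ~~ X t then sw23 t else t.

Definition PP t := X t && Y t && ~~ Z t.
Definition QQ t := Z t && ~~ (X t && Y t).

Lemma neqP (x y : int) : x <> y -> x != y. Proof. by move=> h; apply/eqP. Qed.

Lemma phiPQ t : PP t -> QQ (phi t) /\ phi (phi t) = t.
Proof.
case/andP => /andP [hX hY] hZ.
have [ha ea] := Xspec hX; have [hb eb] := Yspec hY.
rewrite /phi hX hY hZ /=.
case: ltnP => hab.
- have hZ' : Z (sw12 t).
    apply/interP; exists (fb t); split => //.
    rewrite -/(H1 _ _) -/(H3 _ _) s12_1ge ?s12_3 // ; lia.
  have hY' : ~~ Y (sw12 t).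
    apply: ninterP => k hk; rewrite -/(H2 _ _) -/(H3 _ _) s12_3.
    case: (leqP k (fa t)) => hk'.
      by rewrite s12_2le //; apply: Ybef; lia.
    by rewrite s12_2ge 1?ltnW //; apply: ninterE hZ hk.
  have QQ' : QQ (sw12 t) by rewrite /QQ hZ' (negbTE hY') andbF.
  split => //.
  by rewrite /phi hZ' (negbTE hY') andbF /= sw12K.
- have hne : fa t != fb t.
    apply/negP => /eqP e; move: (ninterE hZ ha); rewrite -/(H1 _ _) -/(H3 _ _).
    by rewrite ea e eb eqxx.
  have hba : (fb t < fa t)%N by rewrite ltn_neqAle eq_sym hne.
  have hZ' : Z (sw23 t).
    apply/interP; exists (fa t); split => //.
    rewrite -/(H1 _ _) -/(H3 _ _) s23_1 s23_3ge // ; lia.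
  have hX' : ~~ X (sw23 t).
    apply: ninterP => k hk; rewrite -/(H1 _ _) -/(H2 _ _) s23_1.
    case: (leqP k (fb t)) => hk'.
      by rewrite s23_2le //; apply: Xbef; lia.
    by rewrite s23_2ge 1?ltnW //; apply: ninterE hZ hk.
  have hY' : Y (sw23 t).
    apply/interP; exists (fb t); split => //.
    rewrite -/(H2 _ _) -/(H3 _ _) s23_2le ?s23_3le // .
  have QQ' : QQ (sw23 t) by rewrite /QQ hZ' (negbTE hX').
  split => //.
  by rewrite /phi hZ' (negbTE hX') hY' /= sw23K.
Qed.

Lemma phiQP t : QQ t -> PP (phi t) /\ phi (phi t) = t.
Proof.
case/andP => hZ hXY.
have hnP : (X t && Y t && ~~ Z t) = false by rewrite hZ andbF.
rewrite {1 3}/phi hnP.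
have [c [hc ec]] : exists c, (c <= n)%N /\ H1 t c = H3 t c by apply/interP.
case hY: (Y t) => /=.
- have hnX : ~~ X t by move: hXY; rewrite hY andbT.
  rewrite hZ hnX /=.
  have [hb eb] := Yspec hY.
  have l12 k : (k <= n)%N -> H1 t k < H2 t k.
    by move=> hk; apply: ord12 => m hm; apply: ninterE hnX _; lia.
  have l23 k : (k < fb t)%N -> H2 t k < H3 t k.
    by move=> hk; apply: ord23 => m hm; apply: Ybef; lia.
  have hcb : (fb t < c)%N.
    rewrite ltnNge; apply/negP => hcb; case: (ltnP c (fb t)) => hcb'.
      by have := l12 c hc; have := l23 c hcb'; rewrite ec; lia.
    have e : c = fb t by apply/eqP; rewrite eqn_leq hcb hcb'.
    by have := l12 c hc; rewrite ec e -eb; lia.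
  have hY' : Y (sw23 t).
    apply/interP; exists (fb t); split => //.
    by rewrite -/(H2 _ _) -/(H3 _ _) s23_2le ?s23_3le.
  have hX' : X (sw23 t).
    apply/interP; exists c; split => //.
    by rewrite -/(H2 _ _) -/(H1 _ _) s23_1 s23_2ge 1?ltnW.
  have hZ' : ~~ Z (sw23 t).
    apply: ninterP => k hk; rewrite -/(H1 _ _) -/(H3 _ _) s23_1.
    apply: neqP; case: (leqP k (fb t)) => hk'.
      rewrite s23_3le //; case: (ltnP k (fb t)) => hk2.
        by have := l12 k hk; have := l23 k hk2; lia.
      have e : k = fb t by apply/eqP; rewrite eqn_leq hk' hk2.
      by have := l12 k hk; rewrite e -eb; lia.
    by rewrite s23_3ge 1?ltnW //; have := l12 k hk; lia.
  have PP' : PP (sw23 t) by rewrite /PP hX' hY' hZ'.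
  split => //.
  rewrite /phi hX' hY' hZ' /= fb23 //.
  have [ha' ea'] := Xspec hX'.
  have -> : (fa (sw23 t) < fb t)%N = false.
    apply/negbTE; rewrite -leqNgt; case: (leqP (fa (sw23 t)) (fb t)) => h; last exact: ltnW.
    move: ea'; rewrite s23_1 s23_2le // => ea'.
    by move: (ninterE hnX ha'); rewrite -/(H1 _ _) -/(H2 _ _) ea' eqxx.
  exact: sw23K.
- have hnY : ~~ Y t by rewrite hY.
  have hX : X t by apply: contraT => hnX; move: (noZ hnX hnY); rewrite hZ.
  rewrite hZ /=.
  have [ha ea] := Xspec hX.
  have l23 k : (k <= n)%N -> H2 t k < H3 t k.
    by move=> hk; apply: ord23 => m hm; apply: ninterE hnY _; lia.
  have l12 k : (k < fa t)%N -> H1 t k < H2 t k.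
    by move=> hk; apply: ord12 => m hm; apply: Xbef; lia.
  have hca : (fa t <= c)%N.
    rewrite leqNgt; apply/negP => hca.
    by have := l12 c hca; have := l23 c hc; rewrite ec; lia.
  have hX' : X (sw12 t).
    apply/interP; exists (fa t); split => //.
    by rewrite -/(H2 _ _) -/(H1 _ _) s12_1le ?s12_2le.
  have hY' : Y (sw12 t).
    apply/interP; exists c; split => //.
    by rewrite -/(H2 _ _) -/(H3 _ _) s12_3 s12_2ge.
  have hZ' : ~~ Z (sw12 t).
    apply: ninterP => k hk; rewrite -/(H1 _ _) -/(H3 _ _) s12_3.
    apply: neqP; case: (leqP k (fa t)) => hk'.
      rewrite s12_1le //; case: (ltnP k (fa t)) => hk2.
        by have := l12 k hk2; have := l23 k hk; lia.
      have e : k = fa t by apply/eqP; rewrite eqn_leq hk' hk2.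
      by have := l23 k hk; rewrite e ea; lia.
    by rewrite s12_1ge 1?ltnW //; have := l23 k hk; lia.
  have PP' : PP (sw12 t) by rewrite /PP hX' hY' hZ'.
  split => //.
  rewrite /phi hX' hY' hZ' /= fa12 //.
  have [hb' eb'] := Yspec hY'.
  have -> : (fa t < fb (sw12 t))%N.
    rewrite ltnNge; apply/negP => h.
    move: eb'; rewrite s12_3 s12_2le // => eb'.
    by move: (ninterE hnY hb'); rewrite -/(H2 _ _) -/(H3 _ _) eb' eqxx.
  exact: sw12K.
Qed.

Lemma card_PQ : #|[set t | PP t]| = #|[set t | QQ t]|.
Proof.
apply/eqP; rewrite eqn_leq; apply/andP; split.
- rewrite -(@card_in_imset _ _ phi).
    apply: subset_leq_card; apply/subsetP => x /imsetP [t]; rewrite inE => ht ->.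
    by rewrite inE; case: (phiPQ ht).
  move=> x y; rewrite !inE => hx hy e.
  by rewrite -(phiPQ hx).2 -(phiPQ hy).2 e.
- rewrite -(@card_in_imset _ _ phi).
    apply: subset_leq_card; apply/subsetP => x /imsetP [t]; rewrite inE => ht ->.
    by rewrite inE; case: (phiQP ht).
  move=> x y; rewrite !inE => hx hy e.
  by rewrite -(phiQP hx).2 -(phiQP hy).2 e.
Qed.

Lemma count_n : (#|Vset i j n|)%:Z = (#|W12set i j n|)%:Z + (#|W23set i j n|)%:Z - (#|W13set i j n|)%:Z.
Proof.
set A := [set t | ~~ X t]; set B := [set t | ~~ Y t]; set C := [set t | ~~ Z t].
have eV : Vset i j n = A :&: B.
  apply/setP => t; rewrite /Vset /Uset !inE /=.
  have := @noZ t; rewrite /X /Y /Z.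
  case: (intersect (s1 i j) (L1 t) (s2 i j) (L2 t)); case: (intersect (s2 i j) (L2 t) (s3 i j) (L3 t)) => //= /(_ isT isT) ->.
  by [].
pose XY := [set t | X t && Y t]; pose Zs := [set t | Z t].
have e12 : W12set i j n = A by apply/setP => t; rewrite !inE.
have e23 : W23set i j n = B by apply/setP => t; rewrite !inE.
have e13 : W13set i j n = C by apply/setP => t; rewrite !inE.
have hXY : #|XY| = #|Zs|.
  rewrite -(cardsID Zs XY) -(cardsID XY Zs) setIC.
  have -> : XY :\: Zs = [set t | PP t].
    apply/setP => t; rewrite !inE /PP; case: (X t); case: (Y t); case: (Z t); reflexivity.
  have -> : Zs :\: XY = [set t | QQ t].
    apply/setP => t; rewrite !inE /QQ; case: (X t); case: (Y t); case: (Z t); reflexivity.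
  by rewrite card_PQ.
have hAB : #|A :|: B| = #|C|.
  have -> : A :|: B = ~: XY.
    apply/setP => t; rewrite !inE; case: (X t); case: (Y t); reflexivity.
  have -> : C = ~: Zs by apply/setP => t; rewrite !inE.
  have h1 := cardsC XY; have h2 := cardsC Zs; lia.
have := cardsUI A B; rewrite hAB eV e12 e23 e13 => h; by rewrite -PoszD -h PoszD addrAC subrr add0r.
Qed.
End Main.


Theorem proposition2p2 (i j : nat) (hi : (1 <= i)%N) (hj : (1 <= j)%N) :
  Vgf i j = fps_sub (fps_add (W12gf i j) (W23gf i j)) (W13gf i j).
Proof.
apply: functional_extensionality_dep => n.
exact: (@count_n i j n hi hj).
Qed.
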